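(* Let $n\ge1$ and let $(X_t)_{t\ge0}$ be the classical occupancy Markov chain on $\{0,\dots,n\}$: $\Pr(X_{t+1}=i\mid X_t=i)=i/n$, $\Pr(X_{t+1}=i+1\mid X_t=i)=(n-i)/n$. Then for all integers $0\le r\le k<n$ and $t\ge0$, $$\Pr(X_t\le k\mid X_0=r)=\frac{n-k}{n^t}\binom{n-r}{n-k}\sum_{j=0}^{k-r}(-1)^{k-r-j}\binom{k-r}{j}\frac{(r+j)^t}{n-r-j};$$ moreover $\Pr(X_t\le n\mid X_0=r)=1$ for all $0\le r\le n$, and $\Pr(X_t\le k\mid X_0=r)=0$ if $k<r$.
   Context: Convention $0^0=1$. *)

(* Defs.v *)
From HB Require Import structures.
From mathcomp Require Import all_boot all_order all_algebra.
Set Implicit Arguments. Unset Strict Implicit. Unset Printing Implicit Defensive.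
Import Order.TTheory GRing.Theory Num.Theory.
Local Open Scope ring_scope.

Definition occ_trans (R : realFieldType) (n : nat) : 'M[R]_(n.+1) :=
  \matrix_(i < n.+1, j < n.+1)
    (if (j == i :> nat) then (i%:R / n%:R)
     else if (j == i.+1 :> nat) then ((n - i)%:R / n%:R) else 0).

(* Pr(X_t <= k | X_0 = r) : t-step transition probabilities (matrix power)
   summed over the states j <= k.  r is read as an element of {0..n}. *)
Definition occ_cdf (R : realFieldType) (n t r k : nat) : R :=
  \sum_(j < n.+1 | (j <= k)%N) ((occ_trans R n) ^+ t) (inord r) j.

(* Main.v *)
Require Import Defs.
From HB Require Import structures.
From mathcomp Require Import all_boot all_order all_algebra zify ring lra.
Import Order.TTheory GRing.Theory Num.Theory.
Local Open Scope ring_scope.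


Lemma step_entry (R : realFieldType) (n : nat) t r (j : 'I_n.+1) : (r <= n)%N ->
  (occ_trans R n ^+ t.+1) (inord r) j = r%:R / n%:R * (occ_trans R n ^+ t) (inord r) j
     + (n - r)%:R / n%:R * (occ_trans R n ^+ t) (inord r.+1) j.
Proof.
move=> rn.
rewrite exprS mxE.
have -> : \sum_(l : 'I_n.+1) occ_trans R n (inord r) l * (occ_trans R n ^+ t) l j =
   \sum_(l : 'I_n.+1) ((l == inord r)%:R * (r%:R/n%:R * (occ_trans R n ^+ t) l j)) +
   \sum_(l : 'I_n.+1) ((l == r.+1 :> nat)%:R * ((n-r)%:R/n%:R * (occ_trans R n ^+ t) l j)).
  rewrite -big_split; apply: eq_bigr => l _; rewrite mxE inordK; last by [].
  have E : (l == inord r :> 'I_n.+1) = (l == r :> nat).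
    by apply/eqP/eqP => [->|e]; [rewrite inordK | apply: val_inj; rewrite /= inordK].
  rewrite E; case: (eqVneq (l : nat) r) => [e|ne].
    by rewrite e (ltn_eqF (ltnSn r)) mul1r mul0r; symmetry; apply: addr0.
  case: (eqVneq (l : nat) r.+1) => [e2|ne2]; rewrite /= ?mul0r ?mul1r; [symmetry; apply: add0r | symmetry; apply: addr0].
congr (_ + _).
  rewrite (bigD1 (inord r)) //= eqxx mul1r big1 ?addr0 // => l /negbTE ->.
  by rewrite mul0r.
case: (ltnP r n) => rlt.
  rewrite (bigD1 (inord r.+1)) //= inordK // eqxx mul1r big1 ?addr0 // => l ne.
  case: (eqVneq (l : nat) r.+1) => [e|]; last by move=> _; rewrite mul0r.
  have el : l = inord r.+1 by apply: val_inj; rewrite /= inordK // e.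
  by rewrite el eqxx in ne.
have -> : r = n by apply/eqP; rewrite eqn_leq rn.
rewrite subnn mul0r mul0r big1 // => l _.
by rewrite (ltn_eqF (ltn_ord l)) !mul0r.
Qed.

Lemma cdf_step (R : realFieldType) (n : nat) t r k : (r <= n)%N -> occ_cdf R n t.+1 r k =
  r%:R/n%:R * occ_cdf R n t r k + (n-r)%:R/n%:R * occ_cdf R n t r.+1 k.
Proof.
move=> rn; rewrite /occ_cdf !mulr_sumr -big_split; apply: eq_bigr => j _.
exact: step_entry.
Qed.

Lemma cdf0 (R : realFieldType) (n : nat) r k : (r <= n)%N -> occ_cdf R n 0 r k = (r <= k)%N%:R.
Proof.
move=> rn; rewrite /occ_cdf expr0.
case: (leqP r k) => rk.
  rewrite (bigD1 (inord r)) /= ?inordK ?rk // mxE eqxx big1 ?addr0 // => j /andP[_ ne].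
  by rewrite mxE eq_sym (negbTE ne).
rewrite big1 // => j jk; rewrite mxE.
case: (eqVneq (inord r : 'I_n.+1) j) => [e|]; last by [].
by move: jk; rewrite -e inordK // leqNgt rk.
Qed.


Lemma nR0 (R : realFieldType) (n : nat) (hn : (0 < n)%N) : n%:R != 0 :> R.
Proof. by rewrite pnatr_eq0 -lt0n. Qed.

Lemma cdf_one (R : realFieldType) (n : nat) (hn : (0 < n)%N) t r : (r <= n)%N -> occ_cdf R n t r n = 1.
Proof.
elim: t r => [|t IH] r rn; first by rewrite cdf0 // rn.
rewrite cdf_step //; case: (ltnP r n) => rlt.
  by rewrite !IH // !mulr1 -mulrDl -natrD subnKC ?mulfV ?(@nR0 R n hn) // ltnW.
have -> : r = n by apply/eqP; rewrite eqn_leq rn.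
by rewrite subnn !mul0r addr0 IH // mulr1 mulfV ?(@nR0 R n hn).
Qed.

Lemma cdf_zero (R : realFieldType) (n : nat) t r k : (r <= n)%N -> (k < r)%N -> occ_cdf R n t r k = 0.
Proof.
elim: t r => [|t IH] r rn kr; first by rewrite cdf0 // leqNgt kr.
rewrite cdf_step // IH // mulr0 add0r; case: (ltnP r n) => rlt.
  by rewrite IH ?mulr0 // ltnW.
have -> : r = n by apply/eqP; rewrite eqn_leq rn.
by rewrite subnn !mul0r.
Qed.


Lemma altsum (R : realFieldType) N m :
  \sum_(i < m.+1) ((-1) ^+ i * 'C(m, i)%:R / (N.+1 + i)%:R) =
  (m`!)%:R * (N`!)%:R / ((N.+1 + m)`!)%:R :> R.
Proof.
elim: m N => [|m IH] N.
  rewrite big_ord1 (_ : 'C(0, @ord0 0) = 1)%N // addn0 factS natrM expr0 !mul1r.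
  have F : (N`!)%:R != 0 :> R by rewrite pnatr_eq0 -lt0n fact_gt0.
  by field; rewrite F /= addrC natr1 pnatr_eq0.
rewrite big_ord_recl /= expr0 bin0 mul1r addn0.
have H2 : \sum_(i < m.+1) ((-1) ^+ i.+1 * 'C(m, i.+1)%:R / (N.+1 + i.+1)%:R)
   = \sum_(i < m.+1) ((-1) ^+ i * 'C(m, i)%:R / (N.+1 + i)%:R) - 1 / (N.+1)%:R :> R.
  rewrite [in RHS]big_ord_recl [in LHS]big_ord_recr /= bin_small // mulr0 mul0r addr0.
  rewrite expr0 bin0 mul1r addn0 addrC addKr.
  by apply: eq_bigr => i _; rewrite /bump /= add1n.
have H1 : \sum_(i < m.+1) ((-1) ^+ (bump 0 i) * 'C(m.+1, bump 0 i)%:R / (N.+1 + bump 0 i)%:R)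
  = - \sum_(i < m.+1) ((-1) ^+ i * 'C(m, i)%:R / (N.+2 + i)%:R)
    + (\sum_(i < m.+1) ((-1) ^+ i * 'C(m, i)%:R / (N.+1 + i)%:R) - 1 / (N.+1)%:R) :> R.
  rewrite -H2 -sumrN -big_split; apply: eq_bigr => i _.
  rewrite /bump /= add1n binS natrD exprS addnS addSn.
  by rewrite (_ : (N.+2 + i = (N+i).+2)%N) //; ring.
rewrite H1 !IH.
rewrite (_ : (N.+1 + m.+1 = (N.+1+m).+1)%N) ?addnS // (_ : (N.+2 + m = (N.+1+m).+1)%N) //.
set a := (N.+1 + m)%N.
have F0 : (a`!)%:R != 0 :> R by rewrite pnatr_eq0 -lt0n fact_gt0.
have ha : a.+1%:R = (N.+1)%:R + m.+1%:R :> R by rewrite -natrD /a addSn addnS.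
rewrite (factS a) natrM ha.
revert F0; generalize (a`!) => b F0; clearbody a.
rewrite (factS N) (factS m) !natrM.
have F1 : (N.+1)%:R + m.+1%:R != 0 :> R by rewrite -natrD pnatr_eq0.
have F2 : N.+1%:R != 0 :> R by rewrite pnatr_eq0.
by field; rewrite F0 !nat1r F1 F2.
Qed.

Lemma base_id (R : realFieldType) (N m r : nat) :
  N.+1%:R / 1 * 'C(N.+1 + m, N.+1)%:R *
  \sum_(j < m.+1) ((-1) ^+ (m - j) * 'C(m, j)%:R * (r + j)%:R ^+ 0
      / (N.+1 + m - j)%:R) = 1 :> R.
Proof.
rewrite (reindex_inj rev_ord_inj) /=.
have -> : \sum_(j < m.+1) ((-1) ^+ (m - (m.+1 - j.+1)) * 'C(m, m.+1 - j.+1)%:R *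
      (r + (m.+1 - j.+1))%:R ^+ 0 / (N.+1 + m - (m.+1 - j.+1))%:R)
   = \sum_(j < m.+1) ((-1) ^+ j * 'C(m, j)%:R / (N.+1 + j)%:R) :> R.
  apply: eq_bigr => j _; have jm : (j <= m)%N by rewrite -ltnS.
  rewrite subSS subKn // bin_sub // expr0 mulr1.
  by rewrite (_ : (N.+1 + m - (m - j) = N.+1 + j)%N) //; lia.
rewrite altsum.
have B := @bin_fact (N.+1 + m) N.+1 (leq_addr _ _).
rewrite (_ : (N.+1 + m - N.+1 = m)%N) in B; last by lia.
have Hx : ((N.+1)`!)%:R != 0 :> R by rewrite pnatr_eq0 -lt0n fact_gt0.
have Hy : (m`!)%:R != 0 :> R by rewrite pnatr_eq0 -lt0n fact_gt0.
have E : 'C(N.+1 + m, N.+1)%:R = ((N.+1 + m)%N`!)%:R / ((N.+1)`!%:R * m`!%:R) :> R.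
  rewrite -B !natrM.
  set x := ((N.+1)`!)%:R in Hx *; set y := (m`!)%:R in Hy *; clearbody x y.
  by field; rewrite Hy ?nat1r !pnatr_eq0 -!lt0n ?fact_gt0.
rewrite E (factS N) natrM.
have F : ((N.+1 + m)%N`!)%:R != 0 :> R by rewrite pnatr_eq0 -lt0n fact_gt0.
have HN : (N`!)%:R != 0 :> R by rewrite pnatr_eq0 -lt0n fact_gt0.
have H1 : (N.+1)%:R != 0 :> R by rewrite pnatr_eq0.
set a := ((N.+1 + m)%N`!)%:R in F *; set b := (N`!)%:R in HN *.
set c := (m`!)%:R in Hy *; set d := (N.+1)%:R in H1 *; clearbody a b c d.
by field; rewrite F HN Hy H1.
Qed.

Definition G (R : realFieldType) (n t r k : nat) : R :=
  (n - k)%:R / (n%:R ^+ t) * 'C(n - r, n - k)%:R *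
       \sum_(j < (k - r).+1)
          ((-1) ^+ (k - r - j) * 'C(k - r, j)%:R * (r + j)%:R ^+ t
             / (n - r - j)%:R).

Lemma G_eq (R : realFieldType) n t k : (k < n)%N ->
  G R n t.+1 k k = k%:R / n%:R * G R n t k k.
Proof.
move=> kn; rewrite /G subnn !big_ord1 /= !subn0 !addn0 binn.
have H1 : (n - k)%:R != 0 :> R by rewrite pnatr_eq0 subn_eq0 -ltnNge.
have H2 : n%:R != 0 :> R by rewrite pnatr_eq0 -lt0n (leq_ltn_trans (leq0n k)).
rewrite exprS exprSr.
set a := (n - k)%:R in H1 *; set b := n%:R in H2 *; clearbody a b.
by field; rewrite H1 H2 expf_neq0.
Qed.

Lemma G_step (R : realFieldType) n t r k : (r < k)%N -> (k < n)%N ->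
  G R n t.+1 r k = r%:R / n%:R * G R n t r k + (n - r)%:R / n%:R * G R n t r.+1 k.
Proof.
move=> rk kn.
have [m' hm] : exists m', (k - r = m'.+1)%N by exists (k - r).-1; lia.
have hm2 : (k - r.+1 = m')%N by lia.
rewrite /G hm hm2.
set S := fun t => \sum_(j < m'.+2) ((-1) ^+ (m'.+1 - j) * 'C(m'.+1, j)%:R
   * (r + j)%:R ^+ t / (n - r - j)%:R) : R.
set T := \sum_(j < m'.+1) ((-1) ^+ (m' - j) * 'C(m', j)%:R
   * (r.+1 + j)%:R ^+ t / (n - r.+1 - j)%:R) : R.
have HS : S t.+1 = r%:R * S t + m'.+1%:R * T.
  rewrite /S /T !mulr_sumr.
  have -> : \sum_(j < m'.+2) ((-1) ^+ (m'.+1 - j) * 'C(m'.+1, j)%:R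
      * (r + j)%:R ^+ t.+1 / (n - r - j)%:R) =
    \sum_(j < m'.+2) (r%:R * ((-1) ^+ (m'.+1 - j) * 'C(m'.+1, j)%:R
      * (r + j)%:R ^+ t / (n - r - j)%:R)) +
    \sum_(j < m'.+2) (j%:R * ((-1) ^+ (m'.+1 - j) * 'C(m'.+1, j)%:R
      * (r + j)%:R ^+ t / (n - r - j)%:R)) :> R.
    rewrite -big_split; apply: eq_bigr => j _; rewrite exprS natrD /=. ring.
  congr (_ + _).
  rewrite big_ord_recl /= mul0r add0r; apply: eq_bigr => j _.
  rewrite /bump /= add1n subSS addnS -addSn.
  rewrite (_ : (n - r - j.+1 = n - r.+1 - j)%N); last by lia.
  have hb : (j.+1)%:R * 'C(m'.+1, j.+1)%:R = m'.+1%:R * 'C(m', j)%:R :> R.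
    by rewrite -!natrM mul_bin_diag.
  transitivity ((j.+1%:R * 'C(m'.+1, j.+1)%:R) *
     ((-1) ^+ (m' - j) * (r.+1 + j)%:R ^+ t / (n - r.+1 - j)%:R) : R); first by ring.
  by rewrite hb; ring.
have HS' : S t.+1 = \sum_(j < m'.+2) ((-1) ^+ (m'.+1 - j) * 'C(m'.+1, j)%:R
   * (r + j)%:R ^+ t.+1 / (n - r - j)%:R) by [].
rewrite -HS' HS.
have hc : 'C(n - r.+1, n - k)%:R = m'.+1%:R * 'C(n - r, n - k)%:R / (n - r)%:R :> R.
  have H := mul_bin_down (n - r) (n - k).
  rewrite (_ : (n - r - (n - k) = m'.+1)%N) in H; last by lia.
  rewrite (_ : ((n - r).-1 = n - r.+1)%N) in H; last by lia.
  have Hr : (n - r)%:R != 0 :> R by rewrite pnatr_eq0; lia.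
  rewrite -natrM -H natrM.
  set a := (n - r)%:R in Hr *; clearbody a.
  by field.
rewrite hc.
have H1 : (n - r)%:R != 0 :> R by rewrite pnatr_eq0; lia.
have H2 : n%:R != 0 :> R by rewrite pnatr_eq0; lia.
rewrite exprS.
set a := (n - r)%:R in H1 *; set b := n%:R in H2 *; clearbody a b.
rewrite -/(S t).
set c := (n - k)%:R; set d := 'C(n - r, n - k)%:R; clearbody c d S T.
by field; rewrite H1 H2 expf_neq0.
Qed.

Theorem mainTheorem14 (R : realFieldType) (n : nat) (hn : (1 <= n)%N) :
  (forall (r k t : nat), (r <= k)%N -> (k < n)%N ->
     occ_cdf R n t r k =
       (n - k)%:R / (n%:R ^+ t) * 'C(n - r, n - k)%:R *
       \sum_(j < (k - r).+1)
          ((-1) ^+ (k - r - j) * 'C(k - r, j)%:R * (r + j)%:R ^+ t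
             / (n - r - j)%:R))
  /\ (forall (r t : nat), (r <= n)%N -> occ_cdf R n t r n = 1)
  /\ (forall (r k t : nat), (r <= n)%N -> (k < r)%N -> occ_cdf R n t r k = 0).
Proof.
split; last split; last first.
- by move=> r k t; apply: cdf_zero.
- by move=> r t; apply: cdf_one.
move=> r k t rk kn.
rewrite -/(G R n t r k).
elim: t r rk => [|t IH] r rk.
  rewrite cdf0 ?rk; last by lia.
  have [N hN] : exists N, (n - k = N.+1)%N by exists (n - k).-1; lia.
  have hr : (n - r = N.+1 + (k - r))%N by lia.
  by rewrite /G hN hr base_id.
rewrite cdf_step; last by lia.
case: (ltnP r k) => rk'.
  by rewrite G_step // !IH.
have -> : r = k by lia.
by rewrite G_eq // IH // cdf_zero // mulr0 addr0.
Qed.
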